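(* Assume $W_{S,M}$ is a finite Weyl group, that $K=(k_{s,s'})$ is an integer matrix satisfying conditions (K), and that $e=\{s_+,s_-\}$ satisfies condition (B) with sequence $s_{j_0}=s_-,s_{j_1}=s_+,\dots,s_{j_n}$. Let $S'=S\setminus\{s_{j_n}\}$, $w=s_{j_1}\cdots s_{j_n}$, $\tau:W_{S'}\to W_{S/e,N}$ the isomorphism $\tau(s)=s$ for $s\notin\{s_{j_0},\dots,s_{j_n}\}$, $\tau(s_{j_\ell})=s_{j_{\ell+1}}$ ($1\le \ell\le n-1$), $\tau(s_{j_0})=s_0$, and $\sigma^1:V_{S',\mathbb Z}\to V_{S/e,\mathbb Z}$ given by $\alpha_s\mapsto\alpha_s$ for $s\notin\{s_{j_0},\dots,s_{j_n}\}$ and $\alpha_{s_{j_\ell}}\mapsto\sigma_{s_{j_1}}\cdots\sigma_{s_{j_n}}(\alpha_{s_{j_\ell}})$. Then $\sigma^1$ is a well-defined isomorphism of lattices, and for all $(\alpha,x)\in W^{\mathrm{aff}}_{S'}=V_{S',\mathbb Z}\rtimes W_{S'}$, \[ \phi^{\mathrm{aff}}(\sigma^1(\alpha),\tau(x))=(\sigma_w(\alpha),wxw^{-1})\in W^{\mathrm{aff}}_{S}. \]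
   Context: A Coxeter matrix on $S$ is a symmetric matrix $M=(m_{s,s'})$ with entries in $\mathbb Z_{\ge1}\sqcup\{\infty\}$, $m_{s,s'}=1$ iff $s=s'$; $W_{S,M}$ is generated by $S$ with relations $(ss')^{m_{s,s'}}=1$ for $m_{s,s'}\ne\infty$. Conditions (K) on a real matrix $K=(k_{s,s'})_{s,s'\in S}$: $k_{s,s}=-2$; $k_{s,s'}=0$ if $m_{s,s'}=2$; $k_{s,s'}>0$ if $m_{s,s'}\ge3$; $k_{s,s'}k_{s',s}=4\cos^2(\pi/m_{s,s'})$ if $m_{s,s'}\ne\infty$; $k_{s,s'}k_{s',s}\ge4$ if $m_{s,s'}=\infty$. Given $K$, $V_S=\bigoplus_{s\in S}\mathbb R\alpha_s$ and $\sigma_s(\alpha_{s'})=\alpha_{s'}+k_{s,s'}\alpha_s$ define a faithful representation $\sigma$ of $W_{S,M}$. When $K$ is integral, $V_{S,\mathbb Z}=\bigoplus_s\mathbb Z\alpha_s$ is stable and $W^{\mathrm{aff}}_{S}=V_{S,\mathbb Z}\rtimes W_{S,M}$ with product $(\alpha,x)(\beta,y)=(\alpha+\sigma_x\beta,xy)$. For $S'\subseteq S$, $W_{S'}$ is the subgroup generated by $S'$, $V_{S',\mathbb Z}=\bigoplus_{s\in S'}\mathbb Z\alpha_s$, and $W^{\mathrm{aff}}_{S'}=V_{S',\mathbb Z}\rtimes W_{S'}\subseteq W^{\mathrm{aff}}_S$. Edge contraction: $e=\{s_+,s_-\}$ with $m_{s_+,s_-}=3$; $S/e=(S\setminus\{s_+,s_-\})\sqcup\{s_0\}$;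 $N=(n_{s,s'})$ with $n_{s,s}=1$, $n_{s,s'}=m_{s,s'}$ for distinct $s,s'\ne s_0$, and for $s\ne s_0$: $n_{s,s_0}=m_{s,s_+}+m_{s,s_-}-2$ if $m_{s,s_+}=2$ or $m_{s,s_-}=2$, else $\infty$. $\phi:W_{S/e,N}\to W_{S,M}$ is $s\mapsto s$ ($s\ne s_0$), $s_0\mapsto s_+s_-s_+$. Put $\alpha_{s_0}=\alpha_{s_+}+\alpha_{s_-}$, $V_{S/e,\mathbb Z}=\bigoplus_{s\in S/e}\mathbb Z\alpha_s\subseteq V_{S,\mathbb Z}$, with $W_{S/e,N}$ acting by $\tilde\sigma_s(\alpha_{s'})=\alpha_{s'}+\tilde k_{s,s'}\alpha_s$, where $\tilde k_{s,s'}=k_{s,s'}$ for $s,s'\ne s_0$, $\tilde k_{s,s_0}=k_{s,s_+}+k_{s,s_-}$, $\tilde k_{s_0,s}=k_{s_+,s}+k_{s_-,s}$, $\tilde k_{s_0,s_0}=-2$. $W^{\mathrm{aff}}_{S/e}=V_{S/e,\mathbb Z}\rtimes W_{S/e,N}$ and $\phi^{\mathrm{aff}}(\alpha,x)=(\alpha,\phi(x))$. Condition (B): there exist $n\ge1$ and pairwise distinct $s_{j_0}=s_-,s_{j_1}=s_+,\dots,s_{j_n}\in S$ with $m_{s_{j_k},s_{j_{k+1}}}=3$ for $0\le k\le n-1$, and for every $1\le k\le n$ and every $s\in S$ different from $s_{j_k}$, $s_{j_{k-1}}$ and (if $k<n$) $s_{j_{k+1}}$, $m_{s_{j_k},s}=2$.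 *)

(* Defs.v *)
From HB Require Import structures.
From mathcomp Require Import all_boot all_order all_algebra.
From Stdlib Require Rdefinitions Raxioms RIneq Rtrigo_def Rtrigo1.

Set Implicit Arguments.
Unset Strict Implicit.
Unset Printing Implicit Defensive.

Import GRing.Theory Num.Theory.
Local Open Scope ring_scope.

Section Coxeter.
Variable S : finType.

(* Coxeter matrix: entries in Z_{>=1} ⊔ {∞}; None encodes ∞. *)
Definition coxeter_matrix (M : S -> S -> option nat) : Prop :=
  [/\ forall s t, M s t = M t s,
      forall s t, M s t = Some 1%N <-> s = t
    & forall s t m, M s t = Some m -> (0 < m)%N].

(* Words over S; W_{S,M} is the group presented by generators S and the
   relations (s t)^{m_{s,t}} = 1.  Since every s is an involution (m_{s,s}=1),
   the monoid presented by these relations is already this group, so we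
   represent elements of W_{S,M} by words and equality in W_{S,M} by the
   congruence generated by the relations. *)
Inductive cox_eq (M : S -> S -> option nat) : seq S -> seq S -> Prop :=
| cox_refl u : cox_eq M u u
| cox_sym u v : cox_eq M u v -> cox_eq M v u
| cox_trans u v x : cox_eq M u v -> cox_eq M v x -> cox_eq M u x
| cox_rel u v s t m : M s t = Some m ->
    cox_eq M (u ++ flatten (nseq m [:: s; t]) ++ v) (u ++ v).

Definition cox_finite (M : S -> S -> option nat) : Prop :=
  exists l : seq (seq S), forall u, exists2 v, v \in l & cox_eq M u v.

Definition intR (z : int) : Rdefinitions.R :=
  match z with
  | Posz k => Raxioms.INR k
  | Negz k => Rdefinitions.Ropp (Raxioms.INR k.+1)
  end.

Definition four_cos2 (m : nat) : Rdefinitions.R :=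
  Rdefinitions.Rmult (Raxioms.INR 4)
    (RIneq.Rsqr (Rtrigo_def.cos (Rdefinitions.Rdiv Rtrigo1.PI (Raxioms.INR m)))).

Definition condK (M : S -> S -> option nat) (K : S -> S -> int) : Prop :=
  [/\ forall s, K s s = -2,
      forall s t, M s t = Some 2%N -> K s t = 0,
      forall s t, (M s t = None \/ exists m, M s t = Some m /\ (3 <= m)%N) ->
                  0 < K s t,
      forall s t m, M s t = Some m -> intR (K s t * K t s) = four_cos2 m
    & forall s t, M s t = None -> Rdefinitions.Rle (Raxioms.INR 4) (intR (K s t * K t s))].

(* Condition (B) for e = {sp, sm}, with chain s_{j_k} = j k, 0 <= k <= n. *)
Definition condB (M : S -> S -> option nat) (sp sm : S) (n : nat)
    (j : nat -> S) : Prop :=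
  [/\ (1 <= n)%N,
      forall a b, (a <= n)%N -> (b <= n)%N -> j a = j b -> a = b,
      j 0%N = sm /\ j 1%N = sp,
      forall k, (k < n)%N -> M (j k) (j k.+1) = Some 3%N
    & forall k, (1 <= k <= n)%N -> forall s, s != j k -> s != j k.-1 ->
        ((k < n)%N -> s != j k.+1) -> M (j k) s = Some 2%N].

(* The lattice V_{S,Z} = ⊕_s Z α_s, as integer coordinate vectors. *)
Definition vec := {ffun S -> int}.

Definition alpha (s : S) : vec := [ffun t => (t == s)%:R].

Definition vscale (c : int) (v : vec) : vec := [ffun t => c * v t].

Definition sigma (K : S -> S -> int) (s : S) (v : vec) : vec :=
  v + vscale (\sum_t K s t * v t) (alpha s).

Definition sigma_word (K : S -> S -> int) (u : seq S) (v : vec) : vec :=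
  foldr (sigma K) v u.

(* Contracted generating set S/e = (S \ {sp, sm}) ⊔ {s0}; None is s0. *)
Definition Se (sp sm : S) := option {t : S | (t != sp) && (t != sm)}.

Definition alphaSe (sp sm : S) (t : Se sp sm) : vec :=
  match t with
  | None => alpha sp + alpha sm
  | Some t' => alpha (val t')
  end.

(* V_{S/e,Z} ⊆ V_{S,Z}: integer combinations of the α_t, t ∈ S/e. *)
Definition inVSe (sp sm : S) (v : vec) : Prop :=
  exists c : {ffun Se sp sm -> int},
    v = \sum_(t : Se sp sm) vscale (c t) (alphaSe t).

(* V_{S',Z} with S' = S \ {s_{j_n}}. *)
Definition inVS' (n : nat) (j : nat -> S) (v : vec) : Prop := v (j n) = 0.

Definition chain (n : nat) (j : nat -> S) : seq S := [seq j i | i <- iota 0 n.+1].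

Definition wword (n : nat) (j : nat -> S) : seq S := [seq j i | i <- iota 1 n].

Definition sigma1_basis (K : S -> S -> int) (n : nat) (j : nat -> S) (s : S) : vec :=
  if s \in chain n j then sigma_word K (wword n j) (alpha s) else alpha s.

Definition sigma1 (K : S -> S -> int) (n : nat) (j : nat -> S) (v : vec) : vec :=
  \sum_(s | s != j n) vscale (v s) (sigma1_basis K n j s).

(* τ on generators of W_{S'}: s_{j_0} ↦ s0, s_{j_l} ↦ s_{j_{l+1}} (1<=l<=n-1),
   s ↦ s otherwise.  (Under the hypotheses, for s ≠ s_{j_0}, s_{j_n} the
   target is never sp or sm, so the [insub] below always succeeds.) *)
Definition tau_letter (sp sm : S) (n : nat) (j : nat -> S) (s : S) : Se sp sm :=
  if s == j 0%N then (None : Se sp sm)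
  else let i := index s (chain n j) in
       (insub (if (0 < i < n)%N then j i.+1 else s) : Se sp sm).

Definition tau (sp sm : S) (n : nat) (j : nat -> S) (u : seq S) : seq (Se sp sm) :=
  map (tau_letter sp sm n j) u.

Definition phi_letter (sp sm : S) (t : Se sp sm) : seq S :=
  match t with
  | None => [:: sp; sm; sp]
  | Some t' => [:: val t']
  end.

Definition phi (sp sm : S) (u : seq (Se sp sm)) : seq S :=
  flatten (map (phi_letter (sp:=sp) (sm:=sm)) u).

(* W^aff_S = V_{S,Z} ⋊ W_{S,M}: pairs, with equality componentwise
   (second component up to the Coxeter relations). *)
Definition Waff_eq (M : S -> S -> option nat) (x y : vec * seq S) : Prop :=
  x.1 = y.1 /\ cox_eq M x.2 y.2.

Definition phi_aff (sp sm : S) (x : vec * seq (Se sp sm)) : vec * seq S :=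
  (x.1, phi x.2).

End Coxeter.

(* Main.v *)
Require Import Defs.
From HB Require Import structures.
From mathcomp Require Import all_boot all_order all_algebra.
From Stdlib Require Reals Lra Rtrigo_calc.
From mathcomp Require Import zify ring.
Set Implicit Arguments.
Unset Strict Implicit.
Import GRing.Theory Num.Theory.

Local Open Scope ring_scope.

Section CoxW.
Lemma ceq_ctx (S : finType) (M : S -> S -> option nat) a b u v :
  cox_eq M u v -> cox_eq M (a ++ u ++ b) (a ++ v ++ b).
Proof.
elim=> {u v} [u|u v _ IH|u v x _ IH1 _ IH2|u v s t m Hm].
- exact: cox_refl.
- exact: cox_sym.
- exact: cox_trans IH1 IH2.
- by have := cox_rel (a ++ u) (v ++ b) Hm; rewrite -!catA.
Qed.

Lemma ceq_cat (S : finType) (M : S -> S -> option nat) u u' v v' :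
  cox_eq M u u' -> cox_eq M v v' -> cox_eq M (u ++ v) (u' ++ v').
Proof.
move=> h1 h2; apply: (cox_trans (v := u' ++ v)).
  by have := ceq_ctx [::] v h1; rewrite /= .
by have := ceq_ctx u' [::] h2; rewrite !cats0.
Qed.

Lemma ceq_ss (S : finType) (M : S -> S -> option nat) s :
  M s s = Some 1%N -> cox_eq M [:: s; s] [::].
Proof. by move=> h; have := cox_rel [::] [::] h. Qed.

Lemma ceq_ins (S : finType) (M : S -> S -> option nat) a b x :
  M x x = Some 1%N -> cox_eq M (a ++ b) (a ++ [:: x; x] ++ b).
Proof. by move=> h; apply: cox_sym; have := cox_rel a b h. Qed.

Lemma ceq_comm (S : finType) (M : S -> S -> option nat) s t :
  (forall x, M x x = Some 1%N) -> M t s = Some 2%N -> cox_eq M [:: s; t] [:: t; s].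
Proof.
move=> h1 h2.
apply: (cox_trans (v := [:: t; t; s; t])).
  exact: (ceq_ins [::] [:: s; t] (h1 t)).
apply: (cox_trans (v := [:: t; t; s; t; s; s])).
  exact: (ceq_ins [:: t; t; s; t] [::] (h1 s)).
exact: (cox_rel [:: t] [:: s] h2).
Qed.

Lemma ceq_braid (S : finType) (M : S -> S -> option nat) s t :
  (forall x, M x x = Some 1%N) -> M s t = Some 3%N ->
  cox_eq M [:: s; t; s; t; s] [:: t].
Proof.
move=> h1 h2.
have R : cox_eq M [:: s; t; s; t; s; t] [::] by have := cox_rel [::] [::] h2.
apply: (cox_trans (v := [:: s; t; s; t; s] ++ [:: t; t])).
  apply: cox_sym; have := ceq_ctx [:: s; t; s; t; s] [::] (ceq_ss (h1 t)).
  by rewrite cats0.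
by have := ceq_ctx [::] [:: t] R.
Qed.

Lemma ceq_conj_comm (S : finType) (M : S -> S -> option nat) s x :
  (forall y, M y y = Some 1%N) -> (forall a, a \in x -> M s a = Some 2%N) ->
  cox_eq M (x ++ [:: s] ++ rev x) [:: s].
Proof.
move=> h1; elim: x => [|a x IH] hx /=; first exact: cox_refl.
rewrite rev_cons -cats1 -?catA.
have IH' := IH (fun b hb => hx b (mem_behead (s := a :: x) hb)).
apply: (cox_trans (v := [:: a] ++ [:: s] ++ [:: a])).
  by have := ceq_ctx [:: a] [:: a] IH'; rewrite -!catA.
have hs : M s a = Some 2%N by apply: hx; rewrite inE eqxx.
apply: (cox_trans (v := [:: s] ++ [:: a; a])).
  by have := ceq_ctx [::] [:: a] (ceq_comm h1 hs).
by have := ceq_ctx [:: s] [::] (ceq_ss (h1 a)); rewrite !cats0.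
Qed.

Lemma ceq_revK (S : finType) (M : S -> S -> option nat) x :
  (forall y, M y y = Some 1%N) -> cox_eq M (x ++ rev x) [::].
Proof.
move=> h1; elim: x => [|a x IH] /=; first exact: cox_refl.
rewrite rev_cons -cats1 -?catA.
apply: (cox_trans (v := [:: a] ++ [::] ++ [:: a])).
  by have := ceq_ctx [:: a] [:: a] IH; rewrite -!catA.
exact: ceq_ss.
Qed.
End CoxW.

Local Open Scope ring_scope.

Lemma sigma_alpha (S : finType) (K : S -> S -> int) s t :
  sigma K s (alpha t) = alpha t + vscale (K s t) (alpha s).
Proof.
rewrite /sigma; congr (_ + vscale _ _).
rewrite (bigD1 t) //= big1 => [|u ut]; rewrite !ffunE ?eqxx.
  by rewrite mulr1 addr0.
by rewrite (negbTE ut) mulr0.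
Qed.

Lemma sigmaD (S : finType) (K : S -> S -> int) s (u v : vec S) :
  sigma K s (u + v) = sigma K s u + sigma K s v.
Proof.
apply/ffunP => x; rewrite /sigma !ffunE.
rewrite (eq_bigr (fun t => K s t * u t + K s t * v t)) => [|t _]; last by rewrite ffunE mulrDr.
rewrite big_split /=; ring.
Qed.

Lemma sigmaZ (S : finType) (K : S -> S -> int) s c (u : vec S) :
  sigma K s (vscale c u) = vscale c (sigma K s u).
Proof.
apply/ffunP => x; rewrite /sigma !ffunE.
rewrite (eq_bigr (fun t => c * (K s t * u t))) => [|t _]; last by rewrite ffunE; ring.
rewrite -mulr_sumr; ring.
Qed.

Lemma sigma_wordD (S : finType) (K : S -> S -> int) w (u v : vec S) :
  sigma_word K w (u + v) = sigma_word K w u + sigma_word K w v.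
Proof. by elim: w => //= a w IH; rewrite IH sigmaD. Qed.

Lemma sigma_wordZ (S : finType) (K : S -> S -> int) w c (u : vec S) :
  sigma_word K w (vscale c u) = vscale c (sigma_word K w u).
Proof. by elim: w => //= a w IH; rewrite IH sigmaZ. Qed.

Lemma sigma_word0 (S : finType) (K : S -> S -> int) w :
  sigma_word K w (0 : vec S) = 0.
Proof.
have := sigma_wordD K w 0 0; rewrite addr0 => h.
by have := congr1 (fun z => z - sigma_word K w 0) h; rewrite subrr addrK.
Qed.

Lemma sigma_word_sum (S : finType) (K : S -> S -> int) w (P : pred S) (F : S -> vec S) :
  sigma_word K w (\sum_(s | P s) F s) = \sum_(s | P s) sigma_word K w (F s).
Proof.
apply: (big_morph (sigma_word K w)); [exact: sigma_wordD | exact: sigma_word0].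
Qed.

Lemma sigma_word_fix (S : finType) (K : S -> S -> int) w t :
  (forall a, a \in w -> K a t = 0) -> sigma_word K w (alpha t) = alpha t.
Proof.
elim: w => //= a w IH h.
rewrite IH => [|b hb]; last by apply: h; rewrite inE hb orbT.
rewrite sigma_alpha h ?inE ?eqxx //.
by apply/ffunP => x; rewrite !ffunE mul0r addr0.
Qed.


Module RealFacts.
Import Rdefinitions Raxioms RIneq.
Local Open Scope R_scope.
Lemma four_cos2_3 : four_cos2 3 = INR 1.
Proof.
rewrite /four_cos2.
have -> : INR 3 = 3 by rewrite INR_IZR_INZ.
rewrite Rtrigo_calc.cos_PI3 /Rsqr /=. Lra.lra.
Qed.
End RealFacts.

Local Open Scope ring_scope.

Lemma intR1 (z : int) : (0 < z) -> intR z = Raxioms.INR 1 -> z = 1.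
Proof.
case: z => [k|k] // _ h; have := RIneq.INR_eq k 1 h; by move=> ->.
Qed.

Definition Hyp (S : finType) (M : S -> S -> option nat) (K : S -> S -> int)
  (n : nat) (j : nat -> S) :=
  [/\ forall x, M x x = Some 1%N, forall s t, M s t = M t s, condK M K
    & condB M (j 1%N) (j 0%N) n j].

Section Chain.
Lemma K3 (S : finType) (M : S -> S -> option nat) (K : S -> S -> int) n j s t :
  Hyp M K n j -> M s t = Some 3%N -> K s t = 1.
Proof.
case=> _ hsym [_ _ hpos hcos _] _ h.
have p1 : 0 < K s t by apply: hpos; right; exists 3%N.
have p2 : 0 < K t s by apply: hpos; right; exists 3%N; rewrite hsym.
have := hcos _ _ _ h; rewrite RealFacts.four_cos2_3 => /intR1.
have p3 : 0 < K s t * K t s by rewrite mulr_gt0.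
move=> /(_ p3) e; nia.
Qed.

Lemma jinj (S : finType) (M : S -> S -> option nat) (K : S -> S -> int) n j a b :
  Hyp M K n j -> (a <= n)%N -> (b <= n)%N -> (j a == j b) = (a == b).
Proof.
case=> _ _ _ [_ hi _ _ _] ha hb.
by apply/eqP/eqP => [/hi|->] //; apply.
Qed.

Lemma chainP (S : finType) (n : nat) (j : nat -> S) t :
  reflect (exists2 i, (i <= n)%N & t = j i) (t \in chain n j).
Proof.
apply: (iffP mapP) => [[i]|[i hi ->]].
  by rewrite mem_iota add0n ltnS => hi ->; exists i.
by exists i; rewrite // mem_iota add0n ltnS.
Qed.

Lemma index_chain (S : finType) (M : S -> S -> option nat) (K : S -> S -> int) n j i :
  Hyp M K n j -> (i <= n)%N -> index (j i) (chain n j) = i.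
Proof.
move=> H hi.
have e : j i = nth (j 0%N) (chain n j) i by rewrite (nth_map 0%N) ?size_iota ?nth_iota.
rewrite e index_uniq ?size_map ?size_iota //.
rewrite map_inj_in_uniq ?iota_uniq // => a b; rewrite !mem_iota !add0n !ltnS => ha hb.
by move/eqP; rewrite (jinj H) // => /eqP.
Qed.

Lemma wwordP (S : finType) (n : nat) (j : nat -> S) a :
  a \in wword n j -> exists2 k, (1 <= k <= n)%N & a = j k.
Proof.
by case/mapP => k; rewrite mem_iota add1n ltnS => hk ->; exists k.
Qed.

Lemma KB (S : finType) (M : S -> S -> option nat) (K : S -> S -> int) n j k t :
  Hyp M K n j -> (1 <= k <= n)%N -> t != j k -> t != j k.-1 ->
  ((k < n)%N -> t != j k.+1) -> M (j k) t = Some 2%N /\ K (j k) t = 0.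
Proof.
move=> H hk h1 h2 h3; case: (H) => _ _ [_ hK2 _ _ _] [_ _ _ _ hB].
have hm := hB k hk t h1 h2 h3; split=> //; exact: hK2.
Qed.

Lemma KBi (S : finType) (M : S -> S -> option nat) (K : S -> S -> int) n j k i :
  Hyp M K n j -> (1 <= k <= n)%N -> (i <= n)%N -> i != k -> i != k.-1 ->
  i != k.+1 -> M (j k) (j i) = Some 2%N /\ K (j k) (j i) = 0.
Proof.
move=> H /andP[k1 kn] hi h1 h2 h3; apply: (KB H) => //; first by rewrite k1.
- by rewrite (jinj H).
- by rewrite (jinj H) // (leq_trans (leq_pred k)).
- by move=> kn'; rewrite (jinj H).
Qed.

Lemma KBo (S : finType) (M : S -> S -> option nat) (K : S -> S -> int) n j k t :
  Hyp M K n j -> (1 <= k <= n)%N -> t \notin chain n j ->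
  M (j k) t = Some 2%N /\ K (j k) t = 0.
Proof.
move=> H hk ht; have nt : forall i, (i <= n)%N -> t != j i.
  by move=> i hi; apply/eqP => e; move/negP: ht; apply; apply/chainP; exists i.
case/andP: (hk) => k1 kn.
apply: (KB H) => //; [exact: nt | apply: nt; exact: leq_trans (leq_pred k) kn | by move=> ?; exact: nt].
Qed.
End Chain.

Local Open Scope ring_scope.

Lemma iota_split n l : (1 <= l < n)%N ->
  iota 1 n = iota 1 l.-1 ++ [:: l; l.+1] ++ iota l.+2 (n - l.+1).
Proof.
move=> /andP[l1 ln].
have e : n = (l.-1 + (n - l.-1))%N by lia.
rewrite {1}e iotaD.
have -> : (n - l.-1 = (n - l.+1).+2)%N by lia.
have -> : (1 + l.-1 = l)%N by lia.
by [].
Qed.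

Lemma wword_split (S : finType) n (j : nat -> S) l : (1 <= l < n)%N ->
  wword n j = map j (iota 1 l.-1) ++ [:: j l; j l.+1] ++ map j (iota l.+2 (n - l.+1)).
Proof. by move=> h; rewrite /wword (iota_split h) !map_cat. Qed.

Lemma wword_0 (S : finType) n (j : nat -> S) : (1 <= n)%N ->
  wword n j = j 1%N :: map j (iota 2 n.-1).
Proof. by case: n. Qed.

Lemma vscale1 (S : finType) (v : vec S) : vscale 1 v = v.
Proof. by apply/ffunP => x; rewrite ffunE mul1r. Qed.

Lemma L_out (S : finType) (M : S -> S -> option nat) (K : S -> S -> int) n j s :
  Hyp M K n j -> s \notin chain n j -> sigma_word K (wword n j) (alpha s) = alpha s.
Proof.
move=> H hs; apply: sigma_word_fix => a /wwordP [k hk ->].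
by case: (KBo H hk hs).
Qed.

Lemma L_j0 (S : finType) (M : S -> S -> option nat) (K : S -> S -> int) n j :
  Hyp M K n j ->
  sigma_word K (wword n j) (alpha (j 0%N)) = alpha (j 0%N) + alpha (j 1%N).
Proof.
move=> H; case: (H) => _ hsym _ [n1 _ _ M3 _].
rewrite wword_0 //= sigma_word_fix => [|a /mapP [k]].
  rewrite sigma_alpha (K3 H (t := j 0%N)) ?vscale1 //.
  by rewrite hsym M3.
rewrite mem_iota => hk ->.
have hk' : (1 <= k <= n)%N by lia.
case: (KBi H (i := 0%N) hk') => //; lia.
Qed.

Lemma L_jl (S : finType) (M : S -> S -> option nat) (K : S -> S -> int) n j l :
  Hyp M K n j -> (1 <= l < n)%N ->
  sigma_word K (wword n j) (alpha (j l)) = alpha (j l.+1).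
Proof.
move=> H hl; case: (H) => _ hsym [hKd _ _ _ _] [n1 _ _ M3 _].
rewrite (wword_split _ hl) /sigma_word !foldr_cat -!/(sigma_word _ _ _).
rewrite sigma_word_fix => [|a /mapP [k]]; last first.
  rewrite mem_iota => hk ->.
  have hk' : (1 <= k <= n)%N by lia.
  case: (KBi H (i := l) hk') => //; lia.
rewrite /= sigma_alpha (K3 H (s := j l.+1) (t := j l)); last first.
  by rewrite hsym M3 //; case/andP: hl.
rewrite vscale1 sigmaD !sigma_alpha (K3 H (s := j l) (t := j l.+1)); last first.
  by rewrite M3 //; case/andP: hl.
rewrite hKd.
have -> : alpha (j l) + vscale (-2) (alpha (j l)) + (alpha (j l.+1) + vscale 1 (alpha (j l)))
   = alpha (j l.+1).
  by apply/ffunP => x; rewrite !ffunE; ring.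
rewrite sigma_word_fix // => a /mapP [k]; rewrite mem_iota => hk ->.
have hk' : (1 <= k <= n)%N by lia.
case: (KBi H (i := l.+1) hk') => //; lia.
Qed.

Local Open Scope ring_scope.

Definition pi (S : finType) n (j : nat -> S) t :=
  if t \in chain n j then j (index t (chain n j)).-1 else t.
Definition psi (S : finType) n (j : nat -> S) t :=
  if t \in chain n j then j (index t (chain n j)).+1 else t.

Lemma chain_j (S : finType) n (j : nat -> S) i : (i <= n)%N -> j i \in chain n j.
Proof. by move=> hi; apply/chainP; exists i. Qed.

Lemma pi_j (S : finType) (M : S -> S -> option nat) (K : S -> S -> int) n j i :
  Hyp M K n j -> (i <= n)%N -> pi n j (j i) = j i.-1.
Proof. by move=> H hi; rewrite /pi chain_j // (index_chain H). Qed.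

Lemma psi_j (S : finType) (M : S -> S -> option nat) (K : S -> S -> int) n j i :
  Hyp M K n j -> (i <= n)%N -> psi n j (j i) = j i.+1.
Proof. by move=> H hi; rewrite /psi chain_j // (index_chain H). Qed.

Lemma pi_out (S : finType) n (j : nat -> S) t : t \notin chain n j -> pi n j t = t.
Proof. by rewrite /pi => /negbTE ->. Qed.
Lemma psi_out (S : finType) n (j : nat -> S) t : t \notin chain n j -> psi n j t = t.
Proof. by rewrite /psi => /negbTE ->. Qed.

Lemma pi_ne (S : finType) (M : S -> S -> option nat) (K : S -> S -> int) n j t :
  Hyp M K n j -> pi n j t != j n.
Proof.
move=> H; have n1 : (1 <= n)%N by case: H => _ _ _ [].
case: (boolP (t \in chain n j)) => [/chainP [i hi ->]|ht].
  by rewrite (pi_j H) // (jinj H) //; lia.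
rewrite pi_out //; apply: contra ht => /eqP ->; exact: chain_j.
Qed.

Lemma pi_psi (S : finType) (M : S -> S -> option nat) (K : S -> S -> int) n j s :
  Hyp M K n j -> s != j n -> pi n j (psi n j s) = s.
Proof.
move=> H hs; case: (boolP (s \in chain n j)) => [/chainP [i hi e]|ht].
  subst s; have hi' : (i < n)%N by rewrite ltn_neqAle hi andbT -(jinj H).
  by rewrite (psi_j H) // (pi_j H).
by rewrite psi_out // pi_out.
Qed.

Lemma psi_pi (S : finType) (M : S -> S -> option nat) (K : S -> S -> int) n j (b : vec S) t :
  Hyp M K n j -> b (j 1%N) = b (j 0%N) -> b (psi n j (pi n j t)) = b t.
Proof.
move=> H hb; case: (boolP (t \in chain n j)) => [/chainP [i hi e]|ht].
  subst t; rewrite (pi_j H) // (psi_j H) ?(leq_trans (leq_pred i)) //.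
  by case: i hi.
by rewrite pi_out // psi_out.
Qed.

Lemma basis_val (S : finType) (M : S -> S -> option nat) (K : S -> S -> int) n j s t :
  Hyp M K n j -> s != j n -> sigma1_basis K n j s t = (pi n j t == s)%:R.
Proof.
move=> H hs; have n1 : (1 <= n)%N by case: H => _ _ _ [].
rewrite /sigma1_basis; case: (boolP (s \in chain n j)) => [hc|hc]; last first.
  rewrite ffunE; case: (boolP (t \in chain n j)) => [/chainP [i hi e]|ht].
    subst t; rewrite (pi_j H) //.
    have -> : (j i == s) = false by apply/negbTE; apply: contra hc => /eqP <-; exact: chain_j.
    have -> : (j i.-1 == s) = false.
      by apply/negbTE; apply: contra hc => /eqP <-; apply: chain_j; lia.
    by [].
  by rewrite pi_out.
case/chainP: hc hs => i hi e; subst s => hs.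
have hin : (i < n)%N by rewrite ltn_neqAle hi andbT -(jinj H).
case: (boolP (t \in chain n j)) => [/chainP [k hk e]|ht].
  subst t; rewrite (pi_j H) // (jinj H) //; last by lia.
  case: i hi hs hin => [|i] hi hs hin.
    rewrite (L_j0 H) !ffunE !(jinj H) //.
    by case: k hk => [|[|k]] hk.
  rewrite (L_jl H); last by lia.
  rewrite ffunE (jinj H) //.
  by case: k hk => [|k] hk.
rewrite pi_out //.
have nt : forall k, (k <= n)%N -> (t == j k) = false.
  by move=> k hk; apply/negbTE; apply: contra ht => /eqP ->; exact: chain_j.
case: i hi hs hin => [|i] hi hs hin.
  by rewrite (L_j0 H) !ffunE !nt.
by rewrite (L_jl H) ?ffunE ?nt.
Qed.

Lemma sigma1_val (S : finType) (M : S -> S -> option nat) (K : S -> S -> int) n j (a : vec S) t :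
  Hyp M K n j -> sigma1 K n j a t = a (pi n j t).
Proof.
move=> H; rewrite /sigma1 sum_ffunE.
rewrite (eq_bigr (fun s => a s * (pi n j t == s)%:R)) => [|s hs]; last first.
  by rewrite ffunE (@basis_val _ M K).
rewrite (bigD1 (pi n j t)) ?(pi_ne t H) //= eqxx mulr1 big1 ?addr0 // => s /andP [_ hs].
by rewrite eq_sym (negbTE hs) mulr0.
Qed.

Local Open Scope ring_scope.

Lemma G_letter (S : finType) (M : S -> S -> option nat) (K : S -> S -> int) n j s :
  Hyp M K n j -> s != j n ->
  cox_eq M (phi_letter (tau_letter (j 1%N) (j 0%N) n j s))
           (wword n j ++ [:: s] ++ rev (wword n j)).
Proof.
move=> H hs; case: (H) => h1 hsym _ [n1 _ _ M3 _].
case: (boolP (s \in chain n j)) => [/chainP [i hi e]|ht]; last first.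
  rewrite /tau_letter.
  have -> : (s == j 0%N) = false.
    by apply/negbTE; apply: contra ht => /eqP ->; exact: chain_j.
  rewrite memNindex // size_map size_iota.
  rewrite (_ : (n.+1 < n)%N = false) ?andbF; last by lia.
  case: insubP => [u _ e | /negP []] /=; last first.
    apply/andP; split; apply: contra ht => /eqP ->; exact: chain_j.
  rewrite e; apply: cox_sym; apply: ceq_conj_comm => // a /wwordP [k hk ->].
  by rewrite hsym; case: (KBo H hk ht).
subst s; have hin : (i < n)%N by rewrite ltn_neqAle hi andbT -(jinj H).
case: i hi hs hin => [|i] hi hs hin.
  rewrite /tau_letter eqxx /= (wword_0 _ n1) rev_cons -cats1 /=.
  have -> : j 1%N :: map j (iota 2 n.-1) ++ j 0%N :: rev (map j (iota 2 n.-1)) ++ [:: j 1%N]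
     = [:: j 1%N] ++ (map j (iota 2 n.-1) ++ [:: j 0%N] ++ rev (map j (iota 2 n.-1))) ++ [:: j 1%N].
    by rewrite /= -catA.
  apply: cox_sym.
  have := ceq_ctx [:: j 1%N] [:: j 1%N]
           (ceq_conj_comm (M := M) (s := j 0%N) (x := map j (iota 2 n.-1)) h1 _).
  apply => a /mapP [k]; rewrite mem_iota => hk ->.
  have hk' : (1 <= k <= n)%N by lia.
  by rewrite hsym; case: (KBi H (i := 0%N) hk') => //; lia.
rewrite /tau_letter (jinj H) // (index_chain H) // hin /=.
case: insubP => [u _ e | /negP []] /=; last first.
  by rewrite !(jinj H).
rewrite e; set l := i.+1 in hi hs hin *.
have hl : (1 <= l < n)%N by rewrite /l hin.
rewrite (wword_split _ hl) !rev_cat /=.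
set p := map j (iota 1 l.-1).
set q := map j (iota l.+2 (n - l.+1)).
apply: cox_sym.
apply: (cox_trans (v := p ++ [:: j l; j l.+1] ++ [:: j l] ++ [:: j l.+1; j l] ++ rev p)).
  have C : cox_eq M (q ++ [:: j l] ++ rev q) [:: j l].
    apply: ceq_conj_comm => // a /mapP [k]; rewrite mem_iota => hk ->.
    have hk' : (1 <= k <= n)%N by lia.
    by rewrite hsym; case: (KBi H (i := l) hk') => //; lia.
  have := ceq_ctx (p ++ [:: j l; j l.+1]) ([:: j l.+1; j l] ++ rev p) C.
  by rewrite -!catA /=.
apply: (cox_trans (v := p ++ [:: j l.+1] ++ rev p)).
  have := ceq_ctx p (rev p) (ceq_braid h1 (M3 l hin)).
  by rewrite /= ?catA.
apply: ceq_conj_comm => // a /mapP [k]; rewrite mem_iota => hk ->.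
have hk' : (1 <= k <= n)%N by lia.
by rewrite hsym; case: (KBi H (i := l.+1) hk') => //; lia.
Qed.

Local Open Scope ring_scope.

Lemma sumSe_val (S : finType) (sp sm : S) (c : {ffun Se sp sm -> int}) x :
  (\sum_(t : Se sp sm) vscale (c t) (alphaSe t)) x
  = \sum_(t : Se sp sm) c t * alphaSe t x.
Proof. by rewrite sum_ffunE; apply: eq_bigr => t _; rewrite ffunE. Qed.

Lemma VSe_eq (S : finType) (sp sm : S) (b : vec S) :
  sp != sm -> inVSe sp sm b -> b sp = b sm.
Proof.
move=> hne [c ->]; rewrite !sumSe_val.
have key : forall x, x \in [:: sp; sm] ->
    \sum_(t : Se sp sm) c t * alphaSe t x = c None.
  move=> x hx; rewrite (bigD1 None) //= big1 ?addr0 => [|[t'|] //= _].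
    rewrite !ffunE; move: hx; rewrite !inE => /orP [] /eqP ->.
      by rewrite eqxx (negbTE hne) addr0 mulr1.
    by rewrite eqxx eq_sym (negbTE hne) add0r mulr1.
  rewrite ffunE; case/andP: (valP t') => h1 h2.
  move: hx; rewrite !inE => /orP [] /eqP ->.
    by rewrite eq_sym (negbTE h1) mulr0.
  by rewrite eq_sym (negbTE h2) mulr0.
by rewrite !key // !inE eqxx ?orbT.
Qed.

Lemma VSe_of (S : finType) (sp sm : S) (b : vec S) :
  sp != sm -> b sp = b sm -> inVSe sp sm b.
Proof.
move=> hne hb.
exists [ffun t : Se sp sm => match t with None => b sm | Some t' => b (val t') end].
apply/ffunP => x; rewrite sumSe_val.
case: (boolP ((x != sp) && (x != sm))) => hx.
  rewrite (bigD1 (Some (Sub x hx : {t : S | (t != sp) && (t != sm)}))) //=.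
  rewrite !ffunE /= eqxx mulr1 big1 ?addr0 // => [[t'|]] /= ht.
    rewrite !ffunE; case: eqP => [e|]; last by rewrite mulr0.
    exfalso; move/eqP: ht; apply; congr Some; apply: val_inj => /=; by rewrite e.
  by case/andP: hx => h1 h2; rewrite !ffunE (negbTE h1) (negbTE h2) mulr0.
rewrite (bigD1 None) //= big1 ?addr0 => [|[t'|] //= _].
  rewrite !ffunE; move: hx; rewrite negb_and !negbK => /orP [] /eqP ->.
    by rewrite eqxx (negbTE hne) addr0 mulr1.
  by rewrite eqxx eq_sym (negbTE hne) add0r mulr1.
rewrite !ffunE; case/andP: (valP t') => h1 h2.
move: hx; rewrite negb_and !negbK => /orP [] /eqP ->.
  by rewrite eq_sym (negbTE h1) mulr0.
by rewrite eq_sym (negbTE h2) mulr0.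
Qed.

Lemma word_main (S : finType) (M : S -> S -> option nat) (K : S -> S -> int) n j u :
  Hyp M K n j -> all (fun s => s != j n) u ->
  cox_eq M (phi (tau (j 1%N) (j 0%N) n j u)) (wword n j ++ u ++ rev (wword n j)).
Proof.
move=> H; case: (H) => h1 _ _ _.
elim: u => [|s u IH] /=.
  by move=> _; apply: cox_sym; apply: ceq_revK.
case/andP => hs hu.
rewrite /phi /= -/(phi _) -/(tau _ _ _ _ _).
apply: (cox_trans (v := (wword n j ++ [:: s] ++ rev (wword n j)) ++ (wword n j ++ u ++ rev (wword n j)))).
  exact: ceq_cat (G_letter H hs) (IH hu).
set w := wword n j.
have R : cox_eq M (rev w ++ w) [::].
  by have := ceq_revK (rev w) h1; rewrite revK.
have := ceq_ctx (w ++ [:: s]) (u ++ rev w) R.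
by rewrite -!catA.
Qed.

Lemma vec_decomp (S : finType) n (j : nat -> S) (a : vec S) :
  inVS' n j a -> a = \sum_(s | s != j n) vscale (a s) (alpha s).
Proof.
move=> ha; apply/ffunP => x; rewrite sum_ffunE.
case: (eqVneq x (j n)) => [->|hx].
  rewrite ha big1 // => s hs; rewrite !ffunE eq_sym (negbTE hs) mulr0 //.
rewrite (bigD1 x) //= !ffunE eqxx mulr1 big1 ?addr0 // => s /andP [_ hs].
by rewrite !ffunE eq_sym (negbTE hs) mulr0.
Qed.

Lemma sigma1_word (S : finType) (M : S -> S -> option nat) (K : S -> S -> int) n j a :
  Hyp M K n j -> inVS' n j a -> sigma1 K n j a = sigma_word K (wword n j) a.
Proof.
move=> H ha; rewrite {2}(vec_decomp ha) sigma_word_sum /sigma1.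
apply: eq_bigr => s hs; rewrite sigma_wordZ /sigma1_basis.
by case: ifP => // /negbT hc; rewrite (L_out H hc).
Qed.

Unset Implicit Arguments.
Theorem mainTheorem4 (S : finType) (M : S -> S -> option nat)
    (K : S -> S -> int) (sp sm : S) (n : nat) (j : nat -> S) :
  coxeter_matrix M -> cox_finite M -> condK M K -> condB M sp sm n j ->
  [/\ (* σ^1 is additive (Z-linear) *)
      (forall a b, sigma1 K n j (a + b) = sigma1 K n j a + sigma1 K n j b),
      (* well defined: V_{S',Z} -> V_{S/e,Z} *)
      (forall a, inVS' n j a -> inVSe sp sm (sigma1 K n j a)),
      (* injective on V_{S',Z} *)
      (forall a b, inVS' n j a -> inVS' n j b ->
         sigma1 K n j a = sigma1 K n j b -> a = b),
      (* onto V_{S/e,Z} *)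
      (forall b, inVSe sp sm b -> exists2 a, inVS' n j a & sigma1 K n j a = b)
    & (* φ^aff(σ^1(α), τ(x)) = (σ_w(α), w x w^{-1}) for (α, x) ∈ W^aff_{S'} *)
      forall (a : vec S) (u : seq S), inVS' n j a -> all (fun s => s != j n) u ->
        Waff_eq M (phi_aff (sigma1 K n j a, tau sp sm n j u))
                  (sigma_word K (wword n j) a,
                   wword n j ++ u ++ rev (wword n j))].
Proof.
move=> [hsym hdiag _] _ hK hB.
have hB' := hB; case: hB' => n1 _ [e0 e1] _ _; subst sp sm.
have h1 : forall x, M x x = Some 1%N by move=> x; apply/hdiag.
have H : Hyp M K n j by split.
have hne : j 1%N != j 0%N by rewrite (jinj H).
have s1eq : forall a, sigma1 K n j a (j 1%N) = sigma1 K n j a (j 0%N).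
  by move=> a; rewrite !(sigma1_val _ _ H) !(pi_j H).
split.
- by move=> a b; apply/ffunP => t; rewrite !ffunE !(sigma1_val _ _ H) ffunE.
- by move=> a _; apply: VSe_of.
- move=> a b ha hb e; apply/ffunP => s.
  case: (eqVneq s (j n)) => [->|hs]; first by rewrite ha hb.
  have := congr1 (fun v : vec S => v (psi n j s)) e.
  by rewrite !(sigma1_val _ _ H) (pi_psi H hs).
- move=> b hb; have hb1 := VSe_eq hne hb.
  exists [ffun s => if s == j n then 0 else b (psi n j s)].
    by rewrite /inVS' ffunE eqxx.
  apply/ffunP => t; rewrite (sigma1_val _ _ H) ffunE (negbTE (pi_ne t H)).
  exact: psi_pi H hb1.
- move=> a u ha hu; split; first exact: sigma1_word H ha.
  exact: word_main H hu.
Qed.
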